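(* There does not exist an $S(3,K_4^{(3)}+e,v)$ for $v=5$ or $v=6$.
   Context: $K_4^{(3)}+e$ denotes the 3-uniform hypergraph with vertex set $\{1,2,3,4,5\}$ and edge set $\{\{1,2,3\},\{1,2,4\},\{1,3,4\},\{2,3,4\},\{3,4,5\}\}$. An $S(3,K_4^{(3)}+e,v)$ is a collection of 3-uniform hypergraphs (blocks) on subsets of a $v$-set $X$, each isomorphic to $K_4^{(3)}+e$, whose edge sets partition the set of all 3-subsets of $X$. *)

(* Defs.v *)
From mathcomp Require Import all_boot.
Set Implicit Arguments. Unset Strict Implicit. Unset Printing Implicit Defensive.

(* The hypergraph K_4^(3)+e on vertex set 'I_5 (vertices 1..5 of the paper
   are 0..4 here): edges {1,2,3},{1,2,4},{1,3,4},{2,3,4},{3,4,5}. *)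
Definition K4e_edges : {set {set 'I_5}} :=
  [set [set (inord 0 : 'I_5); inord 1; inord 2];
       [set (inord 0 : 'I_5); inord 1; inord 3];
       [set (inord 0 : 'I_5); inord 2; inord 3];
       [set (inord 1 : 'I_5); inord 2; inord 3];
       [set (inord 2 : 'I_5); inord 3; inord 4]].

(* A block on the point set X is a 3-uniform hypergraph on a subset of X
   isomorphic to K_4^(3)+e; since K_4^(3)+e has no isolated vertices, the
   block is determined by its edge set, which is the image of the edges of
   K_4^(3)+e under an injective vertex map 'I_5 -> X. *)
Definition is_K4e_block (X : finType) (B : {set {set X}}) : Prop :=
  exists f : 'I_5 -> X, injective f /\ B = [set f @: e | e : {set 'I_5} in K4e_edges].

Definition is_S3_K4e_design (X : finType) (P : {set {set {set X}}}) : Prop :=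
  (forall B, B \in P -> is_K4e_block B) /\
  partition P [set A : {set X} | #|A| == 3].

(* Main.v *)
Require Import Defs.
From mathcomp Require Import all_boot zify.
Set Implicit Arguments. Unset Strict Implicit.

Lemma card5 (T : finType) (a b c d e : T) : #|[set a; b; c; d; e]| <= 5.
Proof. rewrite !cardsU !cards1. lia. Qed.

Lemma block_card (X : finType) (B : {set {set X}}) : is_K4e_block B -> #|B| <= 5.
Proof.
move=> [f [_ ->]]. apply: leq_trans (leq_imset_card _ _) _. exact: card5.
Qed.

Lemma ineq (i j : nat) : i < 5 -> j < 5 -> i != j -> (inord i != inord j :> 'I_5).
Proof. move=> hi hj hij. by rewrite -val_eqE /= !inordK. Qed.

Lemma exists_sub (T : finType) (S : {set T}) k : k <= #|S| -> exists A : {set T}, A \subset S /\ #|A| = k.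
Proof.
elim: k => [|k IH] hk; first by exists set0; rewrite sub0set cards0.
have [A [sAS cA]] := IH (ltnW hk).
have : 0 < #|S :\: A| by rewrite cardsD (setIidPr sAS) cA subn_gt0.
move/card_gt0P=> [x]; rewrite inE => /andP [xA xS].
exists (x |: A); split; first by rewrite subUset sub1set xS.
by rewrite cardsU1 xA cA.
Qed.

Lemma block_Q (X : finType) (B : {set {set X}}) : is_K4e_block B ->
  exists Q : {set X}, #|Q| = 4 /\ forall A : {set X}, A \subset Q -> #|A| = 3 -> A \in B.
Proof.
move=> [f [fi ->]].
set a0 := f (inord 0); set a1 := f (inord 1); set a2 := f (inord 2); set a3 := f (inord 3).
have dd : forall i j, i < 5 -> j < 5 -> i != j -> (f (inord i) == f (inord j)) = false.
  by move=> i j hi hj hij; apply/negbTE; rewrite (inj_eq fi) ineq.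
have n01 : (a0 == a1) = false by apply: dd.
have n02 : (a0 == a2) = false by apply: dd.
have n03 : (a0 == a3) = false by apply: dd.
have n12 : (a1 == a2) = false by apply: dd.
have n13 : (a1 == a3) = false by apply: dd.
have n23 : (a2 == a3) = false by apply: dd.
have n10 : (a1 == a0) = false by rewrite eq_sym.
have n20 : (a2 == a0) = false by rewrite eq_sym.
have n30 : (a3 == a0) = false by rewrite eq_sym.
have n21 : (a2 == a1) = false by rewrite eq_sym.
have n31 : (a3 == a1) = false by rewrite eq_sym.
have n32 : (a3 == a2) = false by rewrite eq_sym.
exists (a0 |: (a1 |: (a2 |: [set a3]))); split.
  by rewrite !cardsU1 cards1 !inE n01 n02 n03 n12 n13 n23.
move=> A sAQ cA.
have : #|(a0 |: (a1 |: (a2 |: [set a3]))) :\: A| = 1 by rewrite cardsD (setIidPr sAQ) cA !cardsU1 cards1 !inE n01 n02 n03 n12 n13 n23.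
move/eqP/cards1P=> [k hk].
have kQ : k \in (a0 |: (a1 |: (a2 |: [set a3]))).
  have : k \in [set k] by rewrite inE.
  by rewrite -hk inE => /andP [].
have eA : A = (a0 |: (a1 |: (a2 |: [set a3]))) :\ k.
  apply/setP=> x; rewrite -hk !inE.
  case xA: (x \in A); rewrite /=.
    by have := subsetP sAQ x xA; rewrite !inE => ->.
  by rewrite andNb.
rewrite eA; move: kQ; rewrite !inE => /or4P [] /eqP ->.
- apply/imsetP; exists [set inord 1; inord 2; inord 3]; first by rewrite /K4e_edges !inE eqxx /= ?orbT.
  rewrite !imsetU !imset_set1 -/a0 -/a1 -/a2 -/a3; apply/setP => x; rewrite !inE -?orbA.
  by case: (eqVneq x a0) => [->|_]; rewrite ?eqxx ?n01 ?n02 ?n03 ?n12 ?n13 ?n23 ?n10 ?n20 ?n30 ?n21 ?n31 ?n32 /= ?orbF.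
- apply/imsetP; exists [set inord 0; inord 2; inord 3]; first by rewrite /K4e_edges !inE eqxx /= ?orbT.
  rewrite !imsetU !imset_set1 -/a0 -/a1 -/a2 -/a3; apply/setP => x; rewrite !inE -?orbA.
  by case: (eqVneq x a1) => [->|_]; rewrite ?eqxx ?n01 ?n02 ?n03 ?n12 ?n13 ?n23 ?n10 ?n20 ?n30 ?n21 ?n31 ?n32 /= ?orbF.
- apply/imsetP; exists [set inord 0; inord 1; inord 3]; first by rewrite /K4e_edges !inE eqxx /= ?orbT.
  rewrite !imsetU !imset_set1 -/a0 -/a1 -/a2 -/a3; apply/setP => x; rewrite !inE -?orbA.
  by case: (eqVneq x a2) => [->|_]; rewrite ?eqxx ?n01 ?n02 ?n03 ?n12 ?n13 ?n23 ?n10 ?n20 ?n30 ?n21 ?n31 ?n32 /= ?orbF.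
- apply/imsetP; exists [set inord 0; inord 1; inord 2]; first by rewrite /K4e_edges !inE eqxx /= ?orbT.
  rewrite !imsetU !imset_set1 -/a0 -/a1 -/a2 -/a3; apply/setP => x; rewrite !inE -?orbA.
  by case: (eqVneq x a3) => [->|_]; rewrite ?eqxx ?n01 ?n02 ?n03 ?n12 ?n13 ?n23 ?n10 ?n20 ?n30 ?n21 ?n31 ?n32 /= ?orbF.
Qed.

Definition goodQ (X : finType) (B : {set {set X}}) (Q : {set X}) :=
  (#|Q| == 4) && [forall A : {set X}, (A \subset Q) ==> (#|A| == 3) ==> (A \in B)].
Arguments goodQ {X}.
Definition Qb (X : finType) (B : {set {set X}}) := odflt set0 [pick Q | goodQ B Q].
Arguments Qb {X}.

Lemma Qb_spec (X : finType) (B : {set {set X}}) : is_K4e_block B ->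
  #|Qb B| = 4 /\ forall A : {set X}, A \subset Qb B -> #|A| = 3 -> A \in B.
Proof.
move/block_Q => [Q [cQ hQ]].
rewrite /Qb; case: pickP => [Q' /andP [/eqP c /forallP h] | /(_ Q)] /=.
  split=> // A sA cA. by have := h A; rewrite sA cA eqxx.
rewrite /goodQ cQ eqxx /=. move/negbT/negP; case.
apply/forallP => A; apply/implyP => sA; apply/implyP => /eqP cA; exact: hQ.
Qed.

Theorem lemma4p1 (v : nat) (X : finType) :
  (v = 5 \/ v = 6) -> #|X| = v ->
  ~ (exists P : {set {set {set X}}}, is_S3_K4e_design P).
Proof.
move=> hv cX [P [hB hpart]].
move: hpart => /and3P [/eqP hcov htriv _].
have hsum : 'C(#|X|, 3) <= 5 * #|P|.
  rewrite -card_draws -hcov.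
  have := htriv; rewrite /trivIset => /eqP <-.
  rewrite mulnC -sum_nat_const; apply: leq_sum => B hB'; exact: block_card (hB B hB').
have hint : forall B1 B2, B1 \in P -> B2 \in P -> B1 != B2 -> #|Qb B1 :&: Qb B2| <= 2.
  move=> B1 B2 h1 h2 hne; rewrite leqNgt; apply/negP => h3.
  have [A [sA cA]] := exists_sub h3.
  have A1 := (Qb_spec (hB _ h1)).2 A (subset_trans sA (subsetIl _ _)) cA.
  have A2 := (Qb_spec (hB _ h2)).2 A (subset_trans sA (subsetIr _ _)) cA.
  have := trivIsetP htriv B1 B2 h1 h2 hne; rewrite -setI_eq0 => /eqP h0.
  have : A \in B1 :&: B2 by rewrite inE A1 A2.
  by rewrite h0 inE.
have hun : forall B1 B2, B1 \in P -> B2 \in P -> B1 != B2 -> 6 <= #|Qb B1 :|: Qb B2|.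
  move=> B1 B2 h1 h2 hne.
  have := cardsUI (Qb B1) (Qb B2).
  rewrite (Qb_spec (hB _ h1)).1 (Qb_spec (hB _ h2)).1.
  have := hint B1 B2 h1 h2 hne. move: (#|Qb B1 :|: Qb B2|) (#|Qb B1 :&: Qb B2|) => u w. clear. lia.
case: hv => hv; rewrite hv in cX.
  rewrite cX in hsum.
  have : 1 < #|P| by move: hsum; have -> : 'C(5, 3) = 10 by []; lia.
  move/card_gt1P => [B1 [B2 [h1 h2 hne]]].
  have := hun B1 B2 h1 h2 hne. have := max_card (Qb B1 :|: Qb B2). rewrite cX. lia.
rewrite cX in hsum.
have hP : 3 < #|P| by move: hsum; have -> : 'C(6, 3) = 20 by []; lia.
pose D := [set ~: Qb B | B in P].
have cD : #|D| = #|P|.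
  apply: card_in_imset => B1 B2 h1 h2 /= he.
  apply/eqP; apply/negPn/negP => hne.
  have := hint B1 B2 h1 h2 hne.
  move/setC_inj: he => ->; rewrite setIid (Qb_spec (hB _ h2)).1.
  by [].
have c2 : forall C, C \in D -> #|C| = 2.
  move=> C /imsetP [B h ->].
  have := cardsC (Qb B). rewrite cX (Qb_spec (hB _ h)).1. lia.
have tD : trivIset D.
  apply/trivIsetP => C1 C2 /imsetP [B1 h1 ->] /imsetP [B2 h2 ->] hne.
  have hne' : B1 != B2 by apply: contraNneq hne => ->.
  rewrite -setI_eq0 -setCU -cards_eq0.
  have := hun B1 B2 h1 h2 hne'. have := cardsC (Qb B1 :|: Qb B2). rewrite cX. lia.
have : #|cover D| = #|D| * 2.
  move: tD; rewrite /trivIset => /eqP <-.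
  rewrite -sum_nat_const; apply: eq_bigr => C hC; exact: c2.
have := max_card (cover D). rewrite cX cD. lia.
Qed.
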